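(* Let $n\geq 2$ and let $C$ be a $2$-null completely regular code in $G_n$ with covering radius $\rho\geq 2$ and parameter matrix $[a_0,b_0|c_1,a_1,b_1|\ldots|c_\rho,a_\rho]$, such that $\mathbf{0}\in C$. Then every word of type $1100$ that lies in $C_2$ is adjacent to exactly $c_2-2$ words of weight three that lie in $C_1$.
   Context: $G_n$ is the graph with vertex set $\mathbb{Z}^n$ in which $x,y$ are adjacent iff $\sum_{i=1}^n|x_i-y_i|=1$; $d$ is its graph distance, and the weight of $x$ is $d(x,\mathbf{0})=\sum_i|x_i|$, where $\mathbf{0}$ is the all-zero word. For a vertex set $C$ (a code), $\rho=\max_v d(v,C)$ is its covering radius and $C_i=\{v: d(v,C)=i\}$, so $C_0=C$. $C$ is a completely regular code (CRC) if for all $i,j\in\{0,\ldots,\rho\}$ there is a number $\alpha_{ij}$ such that every vertex of $C_i$ has exactly $\alpha_{ij}$ neighbours in $C_j$, and $\alpha_{ij}=0$ whenever $|i-j|>1$. Writing $a_i=\alpha_{ii}$, $b_i=\alpha_{i,i+1}$, $c_i=\alpha_{i,i-1}$, the parameter matrix is written $[a_0,b_0|c_1,a_1,b_1|\ldots|c_\rho,a_\rho]$. A CRC is $r$-null if $a_0=\cdots=a_{r-1}=0$. The type of a word of weight at most four is the sequence of its four largest absolute values of entries, in nonincreasing order (padded by zeros); e.g. type $1100$ means exactly two entries equal $\pm1$ and all others $0$. *)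

(* Defs.v *)
From mathcomp Require Import all_boot all_order all_algebra.
Set Implicit Arguments. Unset Strict Implicit. Unset Printing Implicit Defensive.
Import Order.TTheory GRing.Theory Num.Theory.

(* Vertices of G_n: words in Z^n. *)
Definition word (n : nat) := {ffun 'I_n -> int}.

Definition zero_word (n : nat) : word n := [ffun => 0%R].

Definition dist (n : nat) (x y : word n) : nat :=
  (\sum_(i < n) `|(x i - y i)%R|%N)%N.

Definition adj (n : nat) (x y : word n) : Prop := dist x y = 1%N.

Definition weight (n : nat) (x : word n) : nat := dist x (zero_word n).

Definition code (n : nat) := word n -> Prop.

Definition dist_code (n : nat) (C : code n) (v : word n) (i : nat) : Prop :=
  (exists c, C c /\ dist v c = i) /\ (forall c, C c -> (i <= dist v c)%N).

Definition layer (n : nat) (C : code n) (i : nat) (v : word n) : Prop :=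
  dist_code C v i.

Definition covering_radius (n : nat) (C : code n) (rho : nat) : Prop :=
  (forall v, exists i, (i <= rho)%N /\ layer C i v) /\
  (exists v, layer C rho v).

Definition exactly (n : nat) (k : nat) (P : word n -> Prop) : Prop :=
  exists s : seq (word n), uniq s /\ size s = k /\ (forall y, y \in s <-> P y).

(* C is completely regular with covering radius rho and intersection numbers
   alpha i j (so a_i = alpha i i, b_i = alpha i i.+1, c_i = alpha i i.-1). *)
Definition crc_params (n : nat) (C : code n) (rho : nat)
    (alpha : nat -> nat -> nat) : Prop :=
  covering_radius C rho /\
  (forall i j, (i <= rho)%N -> (j <= rho)%N ->
     forall v, layer C i v -> exactly (alpha i j) (fun y => adj v y /\ layer C j y)) /\
  (forall i j, (i <= rho)%N -> (j <= rho)%N -> (j.+1 < i)%N \/ (i.+1 < j)%N ->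
     alpha i j = 0%N).

Definition r_null (alpha : nat -> nat -> nat) (r : nat) : Prop :=
  forall i, (i < r)%N -> alpha i i = 0%N.

Definition type1100 (n : nat) (x : word n) : Prop :=
  exists i j : 'I_n, i != j /\ `|x i|%N = 1%N /\ `|x j|%N = 1%N /\
    (forall k, k != i -> k != j -> x k = 0%R).

(* Main.v *)
Require Import Defs.
From mathcomp Require Import all_boot all_order all_algebra.
From mathcomp Require Import zify.
Import Order.TTheory GRing.Theory Num.Theory.
Set Implicit Arguments. Unset Strict Implicit.

Lemma dist0_eq n (x y : word n) : dist x y = 0%N -> x = y.
Proof.
rewrite /dist => /eqP; rewrite sum_nat_eq0 => /forallP H.
apply/ffunP => k; have := H k; rewrite /= => /eqP h.
apply/eqP; rewrite -subr_eq0; apply/eqP; lia.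
Qed.

Lemma dist1P n (x y : word n) : dist x y = 1%N ->
  exists m, `|(x m - y m)%R|%N = 1%N /\ forall k, k != m -> x k = y k.
Proof.
rewrite /dist => H.
case: (pickP (fun m => `|(x m - y m)%R|%N != 0%N)) => [m Hm | H0]; last first.
  by move: H; rewrite big1 // => k _; have := H0 k => /= /negbFE/eqP.
rewrite (bigD1 m) //= in H; move: Hm => /= Hm.
move: H Hm; set a := `|_|%N; set b := (\sum_(_ < n | _) _)%N => H Hm.
have Hr : b = 0%N by lia.
exists m; split; first by lia.
move=> k Hk; move/eqP: Hr; rewrite sum_nat_eq0 => /forallP/(_ k).
rewrite Hk /= => /eqP h; apply/eqP; rewrite -subr_eq0; apply/eqP; lia.
Qed.

Lemma weight_change n (x y : word n) m :
  (forall k, k != m -> x k = y k) ->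
  (weight y + `|x m|%N = weight x + `|y m|%N)%N.
Proof.
move=> H; rewrite /weight /dist (bigD1 m) //= [in RHS](bigD1 m) //=.
rewrite !ffunE !subr0.
rewrite (eq_bigr (fun k => `|(x k - zero_word n k)%R|%N)).
  by rewrite addnAC [RHS]addnAC; congr (_ + _); rewrite addnC.
by move=> k Hk; rewrite H.
Qed.

Lemma aux1 (a b : int) (w : nat) : `|a|%N = 1%N -> `|(a - b)%R|%N = 1%N ->
  (w + `|a| = 2 + `|b|)%N -> w <> 3%N -> b = 0%R.
Proof. lia. Qed.

Lemma aux2 (b : int) (w : nat) : `|(0 - b)%R|%N = 1%N ->
  (w + `|0%R : int| = 2 + `|b|)%N -> w = 3%N.
Proof. lia. Qed.

Section S.
Variables (n : nat) (x : word n) (i j : 'I_n).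
Hypotheses (Hij : i != j) (Hi : `|x i|%N = 1%N) (Hj : `|x j|%N = 1%N)
  (H0 : forall k, k != i -> k != j -> x k = 0%R).

Lemma weight_x : weight x = 2%N.
Proof.
rewrite /weight /dist (bigD1 i) //= (bigD1 j) /=; last by rewrite eq_sym.
rewrite big1 ?ffunE ?subr0; first by lia.
by move=> k /andP [Hk1 Hk2]; rewrite ffunE subr0 H0.
Qed.

Definition zer (l : 'I_n) : word n := [ffun k => if k == l then 0%R else x k].

Lemma dist_zer l : `|x l|%N = 1%N -> dist x (zer l) = 1%N.
Proof.
move=> Hl; rewrite /dist (bigD1 l) //= big1 ?ffunE ?eqxx ?subr0; first by lia.
by move=> k Hk; rewrite ffunE (negbTE Hk) subrr.
Qed.

Lemma weight_zer_i : weight (zer i) = 1%N.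
Proof.
rewrite /weight /dist (bigD1 j) //= big1 ?ffunE ?subr0.
  by rewrite eq_sym (negbTE Hij); lia.
move=> k Hk; rewrite !ffunE subr0; case: eqP => // /eqP Hk'.
by rewrite H0.
Qed.

Lemma weight_zer_j : weight (zer j) = 1%N.
Proof.
rewrite /weight /dist (bigD1 i) //= big1 ?ffunE ?subr0.
  by rewrite (negbTE Hij); lia.
move=> k Hk; rewrite !ffunE subr0; case: eqP => // /eqP Hk'.
by rewrite H0.
Qed.

Lemma adj_classify y : adj x y -> weight y != 3%N -> y = zer i \/ y = zer j.
Proof.
move=> /dist1P [m [Hm Hk]] Hw.
have := weight_change Hk; rewrite weight_x => E.
case: (eqVneq m i) => [Emi | Nmi].
  subst m; left; apply/ffunP => k; rewrite ffunE; case: eqP => [-> | /eqP Nk].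
    by apply: (aux1 Hi Hm E); apply/eqP.
  by rewrite Hk.
case: (eqVneq m j) => [Emj | Nmj].
  subst m; right; apply/ffunP => k; rewrite ffunE; case: eqP => [-> | /eqP Nk].
    by apply: (aux1 Hj Hm E); apply/eqP.
  by rewrite Hk.
exfalso; move: Hm E; rewrite H0 // => Hm E; move/eqP: Hw; apply; exact: aux2 Hm E.
Qed.

End S.

Theorem mainTheorem1 (n : nat) (C : code n) (rho : nat)
    (alpha : nat -> nat -> nat) :
  (2 <= n)%N ->
  crc_params C rho alpha ->
  r_null alpha 2 ->
  (2 <= rho)%N ->
  C (zero_word n) ->
  forall x : word n, type1100 x -> layer C 2 x ->
    exists k, (k + 2)%N = alpha 2%N 1%N /\
      exactly k (fun y => adj x y /\ weight y = 3%N /\ layer C 1 y).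
Proof.
move=> _ [_ [Hreg _]] _ Hrho HC0 x [i [j [Hij [Hi [Hj H0]]]]] Hx.
have [s [Us [Ss Ms]]] := Hreg 2%N 1%N Hrho (leq_trans (isT : (1 <= 2)%N) Hrho) x Hx.
have inl1 l : `|x l|%N = 1%N -> weight (zer x l) = 1%N ->
    adj x (zer x l) /\ layer C 1 (zer x l).
  move=> Hl Hw; split; first by rewrite /adj; exact: (dist_zer Hij Hi Hj Hl).
  split; first by exists (zero_word n).
  move=> c Cc; rewrite lt0n; apply/negP => /eqP /dist0_eq E.
  case: Hx => _ /(_ c Cc); rewrite -E (dist_zer Hij Hi Hj Hl); by [].
have Ii := inl1 i Hi (weight_zer_i Hij Hi Hj H0).
have Ij := inl1 j Hj (weight_zer_j Hij Hi Hj H0).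
exists (size [seq y <- s | weight y == 3%N]); split; last first.
  exists [seq y <- s | weight y == 3%N]; split; first exact: filter_uniq Us.
  split=> // y; rewrite mem_filter; split.
    by move=> /andP [/eqP W /Ms [A L]].
  by move=> [A [W L]]; rewrite W eqxx /=; apply/Ms.
have Hp : perm_eq [seq y <- s | predC (fun y => weight y == 3%N) y]
                  [:: zer x i; zer x j].
  apply: uniq_perm; first exact: filter_uniq Us.
    rewrite /= andbT inE; apply/eqP => /ffunP/(_ j).
    rewrite !ffunE eqxx eq_sym (negbTE Hij) => E.
    by move: Hj; rewrite E.
  move=> y; rewrite mem_filter !inE /=; apply/idP/idP.
    move=> /andP [Hw /Ms [A _]].
    by case: (adj_classify Hij Hi Hj H0 A Hw) => ->; rewrite eqxx ?orbT.
  move=> /orP [] /eqP ->; apply/andP; split.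
  - by rewrite (weight_zer_i Hij Hi Hj H0).
  - by apply/Ms.
  - by rewrite (weight_zer_j Hij Hi Hj H0).
  - by apply/Ms.
have := perm_size Hp; rewrite /= => E.
by rewrite -Ss -(count_predC (fun y => weight y == 3%N) s) -!size_filter E.
Qed.
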